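(* Let $k\ge5$ and let $E$ be a set with $\{0,1,2,k\}\subseteq E\subset\{0,1,\ldots,k\}$ and $|E|=k$ (so exactly one element of $\{3,\ldots,k-1\}$ is missing from $E$). Then the number of $\tau\in\mathcal{S}_k$ with $\mathcal{J}(\tau)=E$ equals $2^{k-3}$ if $k-1\notin E$, and $2^{k-4}$ if $k-1\in E$.
   Context: The pattern of a word of $j$ distinct letters is its order-preserving relabeling by $\{1,\ldots,j\}$; the length-$j$ initial pattern of $\tau$ is the pattern of $\tau_1\ldots\tau_j$. The $j$-set $\mathcal{J}(\tau)$ of $\tau\in\mathcal{S}_k$ is the set consisting of $0$ together with all $j\in\{1,\ldots,k\}$ such that the length-$j$ initial pattern of $\tau$ is an involution in $\mathcal{S}_j$. *)

(* Defs.v *)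
From mathcomp Require Import all_boot all_order all_fingroup.
Set Implicit Arguments. Unset Strict Implicit. Unset Printing Implicit Defensive.

(* Permutations tau in S_k are 'S_k (permutations of 'I_k = {0,...,k-1});
   the one-line word tau_1 ... tau_k is the sequence of values below
   (0-based values; relabeling by an order-isomorphism does not matter). *)
Definition perm_word (k : nat) (tau : 'S_k) : seq nat :=
  [seq val (tau i) | i <- enum 'I_k].

Definition pattern (w : seq nat) : seq nat :=
  [seq count (fun y => y < x) w | x <- w].

Definition is_involution_word (p : seq nat) : bool :=
  [forall i : 'I_(size p), nth 0 p (nth 0 p i) == i].

Definition init_pattern (k : nat) (tau : 'S_k) (j : nat) : seq nat :=
  pattern (take j (perm_word tau)).

Definition jset (k : nat) (tau : 'S_k) : {set 'I_k.+1} :=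
  [set j : 'I_k.+1 | (val j == 0) ||
     ((1 <= val j) && is_involution_word (init_pattern tau j))].

(* Main.v *)
Require Import Defs.
From mathcomp Require Import all_boot all_order all_fingroup.
From mathcomp Require Import zify.
Set Implicit Arguments. Unset Strict Implicit. Unset Printing Implicit Defensive.

Definition ispw n (p : seq nat) := [&& size p == n, all (fun x => x < n) p & uniq p].
Definition ext (p : seq nat) a := rcons [seq x + (a <= x) | x <- p] a.
Definition invw w := is_involution_word w.
Fixpoint En n := if n is n'.+1 then [seq ext p a | p <- En n', a <- iota 0 n] else [:: [::]].

Lemma invP w : reflect (forall i, i < size w -> nth 0 w (nth 0 w i) = i) (invw w).
Proof.
apply: (iffP forallP) => H i.
  by move=> lt; have /eqP := H (Ordinal lt).
by apply/eqP; apply: H; exact: ltn_ord.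
Qed.

Lemma size_ext p a : size (ext p a) = (size p).+1.
Proof. by rewrite /ext size_rcons size_map. Qed.

Lemma nth_ext1 p a i : i < size p -> nth 0 (ext p a) i = nth 0 p i + (a <= nth 0 p i).
Proof. by move=> lt; rewrite /ext nth_rcons size_map lt (nth_map 0). Qed.

Lemma nth_ext2 p a : nth 0 (ext p a) (size p) = a.
Proof. by rewrite /ext nth_rcons size_map ltnn eqxx. Qed.

Lemma nth_ext2' p a n : size p = n -> nth 0 (ext p a) n = a.
Proof. by move=> <-; exact: nth_ext2. Qed.

Lemma ispw_size n p : ispw n p -> size p = n.
Proof. by case/and3P => /eqP. Qed.

Lemma ispw_lt n p i : ispw n p -> i < n -> nth 0 p i < n.
Proof.
case/and3P => /eqP sz /allP al _ lt; apply: al; apply: mem_nth; by rewrite sz.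
Qed.

Lemma ispw_inj n p i j : ispw n p -> i < n -> j < n -> nth 0 p i = nth 0 p j -> i = j.
Proof.
case/and3P => /eqP sz _ u li lj e; apply/eqP.
by rewrite -(nth_uniq 0 _ _ u) ?sz // e.
Qed.

Lemma ispwP n p : size p = n -> (forall i, i < n -> nth 0 p i < n) ->
  (forall i j, i < n -> j < n -> nth 0 p i = nth 0 p j -> i = j) -> ispw n p.
Proof.
move=> sz lt inj; apply/and3P; split; first by rewrite sz.
  apply/(all_nthP 0) => i; rewrite sz; exact: lt.
apply/(uniqP 0) => i j; rewrite !inE sz; exact: inj.
Qed.

Lemma ext_ispw n p a : ispw n p -> a <= n -> ispw n.+1 (ext p a).
Proof.
move=> H an; have sz := ispw_size H.
apply: ispwP; first by rewrite size_ext sz.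
  move=> i; rewrite ltnS leq_eqVlt => /orP[/eqP ->|lt].
    by rewrite (nth_ext2' _ sz) ltnS.
  rewrite nth_ext1 ?sz //; have := ispw_lt H lt; lia.
move=> i j; rewrite ltnS leq_eqVlt => /orP[/eqP ->|li]; rewrite ltnS leq_eqVlt => /orP[/eqP ->|lj] //.
- rewrite (nth_ext2' _ sz) nth_ext1 ?sz //; lia.
- rewrite (nth_ext2' _ sz) nth_ext1 ?sz //; lia.
rewrite !nth_ext1 ?sz // => e; apply: (ispw_inj H) => //; lia.
Qed.

Lemma unext n s : ispw n.+1 s -> exists p a, [/\ ispw n p, a <= n & s = ext p a].
Proof.
move=> H; have sz := ispw_size H.
set a := nth 0 s n.
exists [seq x - (a < x) | x <- take n s], a.
have an : a <= n by rewrite -ltnS; apply: (ispw_lt H).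
have neq : forall i, i < n -> nth 0 s i != a.
  move=> i lt; apply/eqP => e; have := ispw_inj H _ _ e; lia.
have szp : size [seq x - (a < x) | x <- take n s] = n by rewrite size_map size_take sz ltnSn.
have nthp : forall i, i < n -> nth 0 [seq x - (a < x) | x <- take n s] i = nth 0 s i - (a < nth 0 s i).
  move=> i lt; rewrite (nth_map 0) ?nth_take // size_take sz ltnSn //.
split=> //.
- apply: ispwP => //.
    move=> i lt; rewrite nthp //; have := ispw_lt H (ltnW (leq_trans lt (ltnSn _))).
    have := neq i lt; move/eqP; lia.
  move=> i j li lj; rewrite !nthp // => e; apply: (ispw_inj H); try lia.
  have := neq i li; have := neq j lj; move=> /eqP ? /eqP ?; lia.
- apply: (@eq_from_nth _ 0); first by rewrite size_ext szp sz.
  move=> i; rewrite sz ltnS leq_eqVlt => /orP[/eqP ->|lt].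
    by rewrite (nth_ext2' _ szp).
  rewrite nth_ext1 ?szp // nthp //; have := neq i lt; move/eqP; lia.
Qed.

Lemma mem_En n s : (s \in En n) = ispw n s.
Proof.
elim: n s => [|n IH] s.
  by rewrite /= inE; case: s.
have -> : En n.+1 = [seq ext p a | p <- En n, a <- iota 0 n.+1] by [].
apply/idP/idP.
  case/allpairsP => [[p a] /= [pin ain ->]]; apply: ext_ispw; first by rewrite -IH.
  by move: ain; rewrite inE mem_iota; lia.
case/unext => p [a [pp an ->]]; apply/allpairsP; exists (p, a) => /=; split=> //.
  by rewrite IH.
by rewrite inE mem_iota; lia.
Qed.

Lemma card_count_T (T : finType) (P : pred T) : #|[set x | P x]| = count P (enum T).
Proof. rewrite cardsE cardE -size_filter /enum_mem -filter_predI. congr size; apply: eq_filter => x /=. by rewrite andbT. Qed.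



Lemma nth_pw k (t : 'S_k) (i : 'I_k) : nth 0 (perm_word t) i = val (t i).
Proof.
rewrite /perm_word (nth_map i) ?size_enum_ord ?ltn_ord //.
by rewrite nth_ord_enum.
Qed.

Lemma size_pw k (t : 'S_k) : size (perm_word t) = k.
Proof. by rewrite /perm_word size_map size_enum_ord. Qed.

Lemma pw_ispw k (t : 'S_k) : ispw k (perm_word t).
Proof.
apply: ispwP; first exact: size_pw.
  by move=> i lt; rewrite -[i]/(val (Ordinal lt)) nth_pw ltn_ord.
move=> i j li lj; rewrite -[i]/(val (Ordinal li)) -[j]/(val (Ordinal lj)) !nth_pw.
by move/val_inj/perm_inj => [].
Qed.

Lemma pw_inj k : injective (@perm_word k).
Proof.
move=> t1 t2 e; apply/permP => i; apply: val_inj.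
by rewrite -!nth_pw e.
Qed.

Lemma pw_surj k s : ispw k s -> exists t : 'S_k, perm_word t = s.
Proof.
move=> H.
pose f := fun i : 'I_k => Ordinal (ispw_lt H (ltn_ord i)).
have finj : injective f.
  move=> i j /(congr1 val) /= e; apply: val_inj; exact: (ispw_inj H (ltn_ord i) (ltn_ord j) e).
exists (perm finj).
apply: (@eq_from_nth _ 0); first by rewrite size_pw (ispw_size H).
move=> i; rewrite size_pw => lt.
by rewrite -[i]/(val (Ordinal lt)) nth_pw permE.
Qed.

Lemma ext_inj n p1 p2 a1 a2 : ispw n p1 -> ispw n p2 -> ext p1 a1 = ext p2 a2 -> p1 = p2 /\ a1 = a2.
Proof.
move=> H1 H2 e.
have s1 := ispw_size H1; have s2 := ispw_size H2.
have ea : a1 = a2 by rewrite -(nth_ext2' a1 s1) -(nth_ext2' a2 s2) e.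
split=> //; subst a2.
apply: (@eq_from_nth _ 0); first by rewrite s1 s2.
move=> i; rewrite s1 => lt.
have := congr1 (fun s => nth 0 s i) e => /=.
rewrite !nth_ext1 ?s1 ?s2 //; lia.
Qed.

Lemma uniq_En n : uniq (En n).
Proof.
elim: n => [//|n IH].
have -> : En n.+1 = [seq ext p a | p <- En n, a <- iota 0 n.+1] by [].
apply: allpairs_uniq => //; first exact: iota_uniq.
move=> [p1 a1] [p2 a2] H1 H2.
case: (allpairsP H1) => [[q1 b1] [/= i1 _ [-> ->]]].
case: (allpairsP H2) => [[q2 b2] [/= i2 _ [-> ->]]] /= e.
rewrite mem_En in i1; rewrite mem_En in i2.
by case: (ext_inj i1 i2 e) => -> ->.
Qed.

Lemma card_count k (P : pred (seq nat)) :
  #|[set t : 'S_k | P (perm_word t)]| = count P (En k).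
Proof.
rewrite (card_count_T (fun t : 'S_k => P (perm_word t))).
rewrite -(count_map (@perm_word k) P).
suff pe : perm_eq [seq perm_word i | i <- enum 'S_k] (En k) by exact: (seq.permP pe).
apply: uniq_perm.
- rewrite map_inj_uniq ?enum_uniq //; exact: pw_inj.
- exact: uniq_En.
move=> s; rewrite mem_En; apply/idP/idP.
  by case/mapP => t _ ->; exact: pw_ispw.
by case/pw_surj => t <-; apply: map_f; rewrite mem_enum.
Qed.

Definition Jp (w : seq nat) j := (j == 0) || ((1 <= j) && invw (pattern (take j w))).
Definition G m (w : seq nat) := all (fun j => Jp w j == (j != m)) (iota 0 (size w).+1).

Lemma count_lt_iota x n : count (fun y => y < x) (iota 0 n) = minn x n.
Proof.
elim: n => [|n IH]; first by rewrite minn0.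
rewrite -addn1 iotaD count_cat IH /=; lia.
Qed.

Lemma ispw_perm n s : ispw n s -> perm_eq s (iota 0 n).
Proof.
case/and3P => /eqP sz /allP al u.
apply: uniq_perm => //; first exact: iota_uniq.
have sub : {subset s <= iota 0 n} by move=> x /al xn; rewrite mem_iota.
have szle : size (iota 0 n) <= size s by rewrite size_iota sz.
by have [_ e] := uniq_min_size u sub szle.
Qed.

Lemma pattern_id n s : ispw n s -> pattern s = s.
Proof.
move=> H; rewrite /pattern; apply: map_id_in => x xs.
rewrite (seq.permP (ispw_perm H)) count_lt_iota.
have : x < n by case/and3P: H => _ /allP al _; exact: al.
lia.
Qed.

Lemma pattern_mono (f : nat -> nat) t : {mono f : x y / x < y} -> pattern (map f t) = pattern t.
Proof.
move=> mf; rewrite /pattern -map_comp; apply: eq_map => x /=.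
rewrite count_map; apply: eq_count => y /=; exact: mf.
Qed.

Lemma sh_mono a : {mono (fun x => x + (a <= x)) : x y / x < y}.
Proof. move=> x y /=; apply/idP/idP; lia. Qed.

Lemma Jp_ext n p a j : ispw n p -> j <= n -> Jp (ext p a) j = Jp p j.
Proof.
move=> H jn; have sz := ispw_size H.
rewrite /Jp /ext -cats1.
have -> : take j ([seq x + (a <= x) | x <- p] ++ [:: a]) = [seq x + (a <= x) | x <- take j p].
  rewrite take_cat size_map map_take; case: ltnP => // le.
  have ej : j = size p by lia.
  by rewrite ej subnn take0 cats0 take_oversize // size_map.
by rewrite pattern_mono //; exact: sh_mono.
Qed.

Lemma Jp_full n w : ispw n w -> 1 <= n -> Jp w n = invw w.
Proof.
move=> H n1; rewrite /Jp n1 /=.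
have -> : (n == 0) = false by lia.
by rewrite take_oversize ?(ispw_size H) // (pattern_id H).
Qed.

Lemma G_ext m n p a : ispw n p -> a <= n ->
  G m (ext p a) = G m p && (invw (ext p a) == (n.+1 != m)).
Proof.
move=> H an; have sz := ispw_size H.
rewrite /G size_ext sz.
have -> : iota 0 n.+2 = iota 0 n.+1 ++ [:: n.+1] by rewrite -addn1 iotaD.
rewrite all_cat all_seq1; congr andb.
  apply: eq_in_all => j; rewrite mem_iota => jn.
  by rewrite (Jp_ext _ H) //; lia.
by rewrite (Jp_full (ext_ispw H an)).
Qed.

Lemma G_at m n p j : ispw n p -> G m p -> j <= n -> Jp p j = (j != m).
Proof.
move=> H /allP g jn; apply/eqP; apply: g; rewrite mem_iota (ispw_size H); lia.
Qed.

Lemma G_inv m n p : ispw n p -> G m p -> 1 <= n -> n != m -> invw p.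
Proof.
move=> H g n1 nm; rewrite -(Jp_full H n1) (G_at H g) //.
Qed.

Lemma G_ninv m n p : ispw n p -> G m p -> 1 <= n -> n = m -> ~~ invw p.
Proof.
move=> H g n1 nm; rewrite -(Jp_full H n1) (G_at H g) // nm eqxx //.
Qed.

Definition goodend (p : seq nat) := [forall i : 'I_(size p),
  (nth 0 p (size p).-1 <= i) ==> (nth 0 p i == nth 0 p (size p).-1 + (size p).-1 - i)].

Lemma goodendP p : reflect (forall i, i < size p -> nth 0 p (size p).-1 <= i ->
   nth 0 p i = nth 0 p (size p).-1 + (size p).-1 - i) (goodend p).
Proof.
apply: (iffP forallP) => H.
  by move=> i lt; have /implyP h := H (Ordinal lt); move=> /h /eqP.
by move=> i; apply/implyP => le; apply/eqP; apply: H.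
Qed.

Lemma invE n p : ispw n p -> invw p -> forall i, i < n -> nth 0 p (nth 0 p i) = i.
Proof. by move=> H /invP h i lt; apply: h; rewrite (ispw_size H). Qed.

Lemma block_closed n p : ispw n p -> invw p -> goodend p -> 1 <= n ->
  forall i, i < nth 0 p n.-1 -> nth 0 p i < nth 0 p n.-1.
Proof.
move=> H iv /goodendP ge n1 i lt.
have sz := ispw_size H; rewrite sz in ge.
have cn : nth 0 p n.-1 < n by apply: (ispw_lt H); lia.
have iN : i < n by lia.
have pin := ispw_lt H iN.
rewrite ltnNge; apply/negP => le.
have := ge _ pin le; rewrite (invE H iv iN); lia.
Qed.

Lemma L2 n p a : ispw n p -> invw p -> a < n -> invw (ext p a) -> a = nth 0 p n.-1.
Proof.
move=> H iv an /invP iw.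
have sz := ispw_size H.
have := iw n; rewrite size_ext sz ltnSn (nth_ext2' _ sz) nth_ext1 ?sz // => /(_ isT) e.
have := ispw_lt H an => lt.
have e2 : nth 0 p a = n.-1 by lia.
by rewrite -e2 (invE H iv an).
Qed.

Lemma L3a n p : ispw n p -> invw p -> invw (ext p n) /\ goodend (ext p n).
Proof.
move=> H iv; have sz := ispw_size H.
have E1 : forall i, i < n -> nth 0 (ext p n) i = nth 0 p i.
  move=> i lt; rewrite nth_ext1 ?sz //; have := ispw_lt H lt; lia.
have E2 := nth_ext2' n sz.
split.
  apply/invP => i; rewrite size_ext sz ltnS leq_eqVlt => /orP[/eqP ->|lt].
    by rewrite !E2.
  by rewrite E1 // E1 ?(ispw_lt H) // (invE H iv).
apply/goodendP => i; rewrite size_ext sz /= E2 => lt le.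
have -> : i = n by lia.
by rewrite E2; lia.
Qed.

Lemma L3b n p : ispw n p -> invw p -> goodend p -> 1 <= n ->
  invw (ext p (nth 0 p n.-1)) /\ goodend (ext p (nth 0 p n.-1)).
Proof.
move=> H iv ge n1; have sz := ispw_size H.
have bc := block_closed H iv ge n1.
move/goodendP: ge; rewrite sz => ge.
set c := nth 0 p n.-1 in bc ge *.
have cn : c < n by apply: (ispw_lt H); lia.
have E2 := nth_ext2' c sz.
have Elo : forall i, i < c -> nth 0 (ext p c) i = nth 0 p i.
  move=> i lt; rewrite nth_ext1 ?sz; last lia; have := bc _ lt; lia.
have Ehi : forall i, c <= i < n -> nth 0 (ext p c) i = c + n - i.
  move=> i /andP [l1 l2]; rewrite nth_ext1 ?sz // ge //; lia.
split.
  apply/invP => i; rewrite size_ext sz ltnS leq_eqVlt => /orP[/eqP ->|lt].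
    rewrite E2 Ehi; lia.
  case: (ltnP i c) => ic.
    have := bc _ ic => pic.
    by rewrite Elo // Elo // (invE H iv); lia.
  have ei : nth 0 (ext p c) i = c + n - i by apply: Ehi; lia.
  rewrite ei.
  case: (eqVneq i c) => [->|nic].
    have -> : c + n - c = n by lia.
    by rewrite E2.
  rewrite Ehi; lia.
apply/goodendP => i; rewrite size_ext sz /= E2 ltnS leq_eqVlt => /orP[/eqP ->|lt] le.
  by rewrite E2; lia.
by rewrite Ehi; [lia|]; apply/andP; split.
Qed.

Lemma L4 n p : ispw n p -> invw p -> 1 <= n -> invw (ext p (nth 0 p n.-1)) -> goodend p.
Proof.
move=> H iv n1 /invP iw; have sz := ispw_size H.
set c := nth 0 p n.-1 in iw *.
have cn : c < n by apply: (ispw_lt H); lia.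
have key : forall d, d <= n.-1 - c -> nth 0 p (n.-1 - d) = c + d.
  elim=> [|d IH] le; first by rewrite subn0 addn0.
  set b := n.-1 - d.+1.
  have bn : b < n by rewrite /b; lia.
  set i := nth 0 p b.
  have iN : i < n by apply: (ispw_lt H).
  have pi : nth 0 p i = b by apply: (invE H iv).
  have e1 : nth 0 (ext p c) i = n.-1 - d by rewrite nth_ext1 ?sz // pi /b; lia.
  have e2 : nth 0 (ext p c) (n.-1 - d) = c + d.+1.
    rewrite nth_ext1 ?sz; last lia.
    rewrite IH; last lia; lia.
  have := iw i; rewrite size_ext sz e1 e2 => /(_ (leq_trans iN (leqnSn _))).
  by rewrite /i => ->.
apply/goodendP; rewrite sz => i lt le.
have := key (n.-1 - i); rewrite subKn; last lia.
by move=> ->; lia.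
Qed.

Lemma L5 n p a : ispw n p -> invw p -> a <= n -> invw (ext p a) -> goodend (ext p a).
Proof.
move=> H iv; rewrite leq_eqVlt => /orP[/eqP ->|an] iw.
  by case: (L3a H iv).
have n1 : 1 <= n by lia.
have ea := L2 H iv an iw; rewrite ea in iw *.
by case: (L3b H iv (L4 H iv n1 iw) n1).
Qed.

Lemma count_pred1_iota x N : x < N -> count (fun a => a == x) (iota 0 N) = 1.
Proof.
move=> lt; transitivity (count (pred1 x) (iota 0 N)) => //.
by rewrite (count_uniq_mem x (iota_uniq 0 N)) mem_iota lt.
Qed.

Lemma L6 n p : ispw n p -> invw p -> 1 <= n ->
  count (fun a => invw (ext p a)) (iota 0 n.+1) = (goodend p).+1.
Proof.
move=> H iv n1.
set c := nth 0 p n.-1.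
have cn : c < n by apply: (ispw_lt H); lia.
rewrite (@eq_in_count _ _ (fun a => (a == n) || (goodend p && (a == c)))); last first.
  move=> a; rewrite mem_iota => /andP[_ an].
  case: (eqVneq a n) => [->|ne] /=.
    by case: (L3a H iv) => ->.
  have alt : a < n by lia.
  apply/idP/idP.
    move=> iw; have ea := L2 H iv alt iw.
    rewrite ea eqxx andbT; rewrite ea in iw; exact: (L4 H iv n1 iw).
  by case/andP => g /eqP ->; case: (L3b H iv g n1).
case: (goodend p).
  have := count_predUI (pred1 n) (pred1 c) (iota 0 n.+1).
  rewrite (@eq_count _ (predI (pred1 n) (pred1 c)) pred0); last first.
    by move=> a /=; apply/negbTE; apply/negP => /andP[/eqP ? /eqP ?]; lia.
  rewrite count_pred0 addn0.
  have h1 : count (pred1 n) (iota 0 n.+1) = 1 by apply: count_pred1_iota.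
  have h2 : count (pred1 c) (iota 0 n.+1) = 1 by apply: count_pred1_iota; lia.
  rewrite h1 h2 => e; rewrite -[RHS]/(1+1) -e.
  by apply: eq_count => a.
rewrite (@eq_count _ _ (pred1 n)); first exact: count_pred1_iota.
by move=> a; rewrite andFb orbF.
Qed.

Lemma L7 n r b : ispw n r -> b <= n -> invw (ext r b) -> goodend (ext r b) -> invw r.
Proof.
move=> H bn iw ge; have sz := ispw_size H.
have Hw := ext_ispw H bn.
have szw : size (ext r b) = n.+1 by rewrite size_ext sz.
have E2 := nth_ext2' b sz.
have bc := block_closed Hw iw ge (ltn0Sn n).
rewrite /= E2 in bc.
move/goodendP: ge; rewrite szw /= E2 => ge.
have Lo : forall i, i < b -> nth 0 r i = nth 0 (ext r b) i /\ nth 0 r i < b.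
  move=> i ib; have := bc _ ib; rewrite nth_ext1 ?sz; [|lia]; lia.
have Hi : forall i, b <= i -> i < n -> nth 0 r i = b + n.-1 - i.
  move=> i bi iN; have := ge i (leq_trans iN (leqnSn _)) bi.
  rewrite nth_ext1 ?sz //; have := ispw_lt H iN; lia.
apply/invP => i; rewrite sz => iN.
case: (ltnP i b) => ib.
  have [e1 l1] := Lo _ ib.
  have [e2 _] := Lo _ l1.
  rewrite e2 e1; apply: (invE Hw iw); lia.
rewrite Hi // Hi; lia.
Qed.

Lemma L8 n r b : ispw n r -> b <= n -> invw (ext r b) ->
  (b = n /\ invw r) \/ (b < n /\ nth 0 r b = n.-1).
Proof.
move=> H bn iw; have sz := ispw_size H.
have Hw := ext_ispw H bn.
have E2 := nth_ext2' b sz.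
case: (eqVneq b n) => [eb|ne].
  left; split=> //; subst b.
  have E1 : forall i, i < n -> nth 0 (ext r n) i = nth 0 r i.
    move=> i lt; rewrite nth_ext1 ?sz //; have := ispw_lt H lt; lia.
  apply/invP => i; rewrite sz => lt.
  have := invE Hw iw (leq_trans lt (leqnSn _)).
  by rewrite E1 // E1 // (ispw_lt H).
right; have bl : b < n by lia.
split=> //.
have := invE Hw iw (ltnSn n); rewrite E2 nth_ext1 ?sz //.
have := ispw_lt H bl; lia.
Qed.

Lemma nth_ee n q a b i : size q = n -> i < n ->
  nth 0 (ext (ext q a) b) i = (nth 0 q i + (a <= nth 0 q i)) + (b <= nth 0 q i + (a <= nth 0 q i)).
Proof. move=> sz lt; rewrite nth_ext1 ?size_ext ?sz; [|lia]. by rewrite nth_ext1 ?sz. Qed.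

Lemma nth_een n q a b : size q = n -> nth 0 (ext (ext q a) b) n = a + (b <= a).
Proof. move=> sz; rewrite nth_ext1 ?size_ext ?sz //. by rewrite (nth_ext2' _ sz). Qed.

Lemma nth_een1 n q a b : size q = n -> nth 0 (ext (ext q a) b) n.+1 = b.
Proof. move=> sz; apply: nth_ext2'; by rewrite size_ext sz. Qed.

Lemma L9 n q a b : 2 <= n -> ispw n q -> invw q -> goodend q ->
  (nth 0 q n.-1 = n.-1 -> forall i, nth 0 q n.-2 <= i -> i <= n.-2 ->
      nth 0 q i = nth 0 q n.-2 + n.-2 - i) ->
  a <= n -> b <= n.+1 ->
  (~~ invw (ext q a) && invw (ext (ext q a) b)) =
  (a == (if nth 0 q n.-1 == n.-1 then nth 0 q n.-2 else n.-1)) && (b == nth 0 q n.-1).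
Proof.
move=> n2 H iv ge H2 an bn.
have sz := ispw_size H.
have n1 : 1 <= n by lia.
have bc := block_closed H iv ge n1.
have gq := ge; move/goodendP: gq; rewrite sz => gq.
set c := nth 0 q n.-1 in bc gq H2 *.
have cn : c < n by apply: (ispw_lt H); lia.
have Q := invE H iv.
have L := fun i => @ispw_lt n q i H.
have qc : nth 0 q c = n.-1 by rewrite /c Q //; lia.
have Hra := ext_ispw H an.
have cdef : nth 0 q n.-1 = c by [].
clearbody c.
apply/idP/idP.
- case/andP => nr iw.
  case: (L8 Hra bn iw) => [[_ ir]|[bl rb]]; first by rewrite ir in nr.
  have alt : a < n.
    rewrite ltn_neqAle an andbT; apply/eqP => ea; subst a.
    by case: (L3a H iv) => ir _; rewrite ir in nr.
  have bl' : b < n.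
    rewrite ltn_neqAle -ltnS bl andbT; apply/eqP => eb; subst b.
    move: rb; rewrite (nth_ext2' _ sz); lia.
  have eb : b = c.
    move: rb; rewrite nth_ext1 ?sz // => rb.
    have qb : nth 0 q b = n.-1 by have := L _ bl'; lia.
    by rewrite -cdef -qb Q.
  subst b.
  have Hw := ext_ispw Hra bn.
  have wn : nth 0 (ext (ext q a) c) n = a + (c <= a) by apply: nth_een.
  have := invE Hw iw (ltnW (ltnSn n.+1)); rewrite wn.
  case: (ltnP a c) => ac.
  + rewrite addn0.
    rewrite (nth_ee _ _ sz alt) => ex.
    have qa := Q _ alt.
    have xl := L _ alt.
    have xne : nth 0 q a != n.-1.
      by apply/eqP => e; move: qa; rewrite e cdef; lia.
    have xe : nth 0 q a = n.-2 by lia.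
    have aq : a = nth 0 q n.-2 by rewrite -xe qa.
    have ce : c = n.-1.
      case: (ltnP c n.-1) => cl; last lia.
      have := gq n.-2; rewrite -aq; lia.
    rewrite (_ : (c == n.-1) = true); last by apply/eqP.
    by rewrite -aq !eqxx.
  + case: (eqVneq a n.-1) => [ea|ane].
      have cne : c != n.-1.
        apply/eqP => ce; move: nr; rewrite ea -ce.
        by case: (L3b H iv ge n1); rewrite cdef => -> _.
      by rewrite (negbTE cne) ea !eqxx.
    have a1n : a.+1 < n by lia.
    rewrite addn1.
    rewrite (nth_ee _ _ sz a1n) => ex.
    have qa := Q _ a1n.
    have xl := L _ a1n.
    have xne : nth 0 q a.+1 != n.-1.
      by apply/eqP => e; move: qa; rewrite e cdef; lia.
    have xe : nth 0 q a.+1 = n.-2 by lia.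
    have aq : a.+1 = nth 0 q n.-2 by rewrite -xe qa.
    have ace : a = c.
      have := gq n.-2; rewrite -aq; lia.
    move: nr; rewrite ace.
    by case: (L3b H iv ge n1); rewrite cdef => -> _.
- case/andP => /eqP ea /eqP eb; subst b.
  case: (eqVneq c n.-1) => [ce|cne].
  + move: ea; rewrite ce eqxx => ea.
    have H2' := H2 ce.
    have a0l : a < n.-1.
      have : a < n by rewrite ea; apply: L; lia.
      move=> al; rewrite ltn_neqAle; apply/andP; split; last lia.
      apply/eqP => e; have := Q n.-2; rewrite -ea e cdef ce; lia.
    have qa : nth 0 q a = n.-2 by rewrite ea Q //; lia.
    have lo : forall i, i < a -> nth 0 q i < a.
      move=> i ia.
      have iN : i < n by lia.
      have := L _ iN; have := Q _ iN.
      case: (ltnP (nth 0 q i) a) => // le qi ql.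
      case: (eqVneq (nth 0 q i) n.-1) => [e|ne].
        by move: qi; rewrite e cdef ce; lia.
      have := H2' (nth 0 q i); rewrite -ea => /(_ le); rewrite qi; lia.
    apply/andP; split.
      apply/negP => ir.
      have := invE Hra ir (ltnSn n).
      rewrite (nth_ext2' _ sz) nth_ext1 ?sz; [|lia].
      rewrite qa; lia.
    move: H2'; rewrite -ea => H2'.
    subst c.
    have W : forall j, j < n -> nth 0 (ext (ext q a) n.-1) j =
       nth 0 q j + (a <= nth 0 q j) + (n.-1 <= nth 0 q j + (a <= nth 0 q j)).
      move=> j jl; exact: (nth_ee _ _ sz jl).
    have Wn : nth 0 (ext (ext q a) n.-1) n = a + (n.-1 <= a) by apply: nth_een.
    have Wn1 : nth 0 (ext (ext q a) n.-1) n.+1 = n.-1 by apply: nth_een1.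
    apply/invP => i; rewrite !size_ext sz => lt.
    case: (eqVneq i n.+1) => [->|i1].
      rewrite Wn1 W; [|lia]. rewrite ce; lia.
    case: (eqVneq i n) => [->|i2].
      rewrite Wn.
      have -> : a + (n.-1 <= a) = a by lia.
      rewrite W; [|lia]. rewrite qa; lia.
    case: (eqVneq i n.-1) => [->|i3].
      have -> : nth 0 (ext (ext q a) n.-1) n.-1 = n.+1 by rewrite W ?ce; lia.
      by rewrite Wn1.
    have iN : i < n.-1 by lia.
    case: (ltnP i a) => ia.
      have qi := lo _ ia.
      have -> : nth 0 (ext (ext q a) n.-1) i = nth 0 q i by rewrite W; lia.
      by rewrite W ?Q; lia.
    have qi : nth 0 q i = a + n.-2 - i by apply: H2'; lia.
    case: (eqVneq i a) => [eia|nia].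
      subst i.
      have -> : nth 0 (ext (ext q a) n.-1) a = n by rewrite W ?qa; lia.
      rewrite Wn; lia.
    have -> : nth 0 (ext (ext q a) n.-1) i = a + n.-1 - i by rewrite W ?qi; lia.
    rewrite W ?H2'; lia.
  + move: ea; rewrite (negbTE cne) => ea; subst a.
    have clt : c < n.-1 by lia.
    apply/andP; split.
      apply/negP => ir.
      have := invE Hra ir (ltnSn n).
      rewrite (nth_ext2' _ sz) nth_ext1 ?sz; [|lia].
      rewrite cdef; lia.
    have W : forall j, j < n -> nth 0 (ext (ext q n.-1) c) j =
       nth 0 q j + (n.-1 <= nth 0 q j) + (c <= nth 0 q j + (n.-1 <= nth 0 q j)).
      move=> j jl; exact: (nth_ee _ _ sz jl).
    have Wn : nth 0 (ext (ext q n.-1) c) n = n.-1 + (c <= n.-1) by apply: nth_een.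
    have Wn1 : nth 0 (ext (ext q n.-1) c) n.+1 = c by apply: nth_een1.
    apply/invP => i; rewrite !size_ext sz => lt.
    case: (eqVneq i n.+1) => [->|i1].
      rewrite Wn1 W; [|lia]. rewrite qc; lia.
    case: (eqVneq i n) => [->|i2].
      rewrite Wn.
      have -> : n.-1 + (c <= n.-1) = n by lia.
      rewrite Wn; lia.
    case: (eqVneq i c) => [->|i3].
      have -> : nth 0 (ext (ext q n.-1) c) c = n.+1 by rewrite W ?qc; lia.
      by rewrite Wn1.
    have iN : i < n by lia.
    case: (ltnP i c) => ic.
      have qi := bc _ ic.
      have -> : nth 0 (ext (ext q n.-1) c) i = nth 0 q i by rewrite W; lia.
      by rewrite W ?Q; lia.
    have qi : nth 0 q i = c + n.-1 - i by apply: gq.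
    have -> : nth 0 (ext (ext q n.-1) c) i = c + n - i by rewrite W ?qi; lia.
    rewrite W ?gq; lia.
Qed.

Lemma En_succ n : En n.+1 = flatten [seq [seq ext p a | a <- iota 0 n.+1] | p <- En n].
Proof. by []. Qed.

Lemma count_En_succ n P : count P (En n.+1) =
  sumn [seq count (fun a => P (ext p a)) (iota 0 n.+1) | p <- En n].
Proof.
rewrite En_succ count_flatten -map_comp; congr sumn; apply: eq_map => p /=.
by rewrite count_map.
Qed.

Lemma sumn_flat (T : Type) (F : T -> nat) (ss : seq (seq T)) :
  sumn (map F (flatten ss)) = sumn [seq sumn (map F s) | s <- ss].
Proof. by elim: ss => [|s ss IH] //=; rewrite map_cat sumn_cat IH. Qed.

Lemma sumn_scale (T : eqType) (s : seq T) (f : T -> nat) (P : pred T) c :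
  (forall x, x \in s -> f x = c * P x) -> sumn (map f s) = c * count P s.
Proof.
elim: s => [|x s IH] H /=; first by rewrite muln0.
rewrite H ?mem_head // IH; first by rewrite mulnDr.
by move=> y ys; apply: H; rewrite in_cons ys orbT.
Qed.

Lemma invw_nil : invw [::].
Proof. by apply/invP. Qed.

Lemma GE m n p : ispw n p -> G m p -> 1 <= n -> n != m -> n != m.+1 -> goodend p.
Proof.
move=> H g n1 nm nm1.
case: n H g n1 nm nm1 => [//|n'] H g _ nm nm1.
case: (unext H) => p' [a [H' an ep]]; subst p.
rewrite (G_ext _ H' an) in g; case/andP: g => g' /eqP iw.
have iw' : invw (ext p' a) by rewrite iw.
have ip' : invw p'.
  clear H iw; case: n' H' an g' nm nm1 iw' => [|n''] H' an g' nm nm1 iw'.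
    have sz := ispw_size H'; rewrite (size0nil sz); exact: invw_nil.
  apply: (G_inv H' g') => //; lia.
exact: (L5 H' ip' an iw').
Qed.

Lemma G1 m : 2 <= m -> G m [:: 0].
Proof.
move=> m2; rewrite /G /= /Jp /=.
have e : pattern [:: 0] = [:: 0] by [].
have -> : invw (pattern [:: 0]) = true by rewrite e; apply/invP => -[|i] //.
rewrite andbT; apply/andP; split; rewrite eq_sym eqb_id; lia.
Qed.

Lemma count_lay m n : 1 <= n -> n < m -> count (G m) (En n) = 2 ^ n.-1.
Proof.
move=> n1; elim: n n1 => [//|n IH] _ nm.
case: (posnP n) => [->|n0].
  have -> : En 1 = [:: [:: 0]] by [].
  rewrite -[count _ _]/(nat_of_bool (G m [:: 0]) + 0) G1 //; lia.
rewrite count_En_succ (@sumn_scale _ _ _ (G m) 2); last first.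
  move=> p; rewrite mem_En => H.
  case g : (G m p); last first.
    rewrite muln0; apply/eqP; rewrite -leqn0 leqNgt -has_count; apply/negP.
    case/hasP => a ain; rewrite mem_iota in ain.
    by rewrite (G_ext _ H) ?g //; lia.
  rewrite (@eq_in_count _ _ (fun a => invw (ext p a))); last first.
    move=> a; rewrite mem_iota => ain.
    rewrite (G_ext _ H) ?g /=; last lia.
    by rewrite (_ : (n.+1 != m) = true) ?eqb_id //; lia.
  rewrite (L6 H) //; last by apply: (G_inv H g) => //; lia.
  by rewrite (GE H g) //; lia.
rewrite IH //; last lia.
case: n n0 {IH nm} => // n _ /=; by rewrite expnS.
Qed.

Lemma count_and_iota (c : bool) x N : x < N ->
  count (fun b => c && (b == x)) (iota 0 N) = c.
Proof.
move=> lt; case: c => /=; first exact: count_pred1_iota.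
by rewrite count_pred0.
Qed.

Lemma prefix_block m n q : 2 <= n -> n < m -> ispw n q -> G m q ->
  (nth 0 q n.-1 = n.-1 -> forall i, nth 0 q n.-2 <= i -> i <= n.-2 ->
      nth 0 q i = nth 0 q n.-2 + n.-2 - i).
Proof.
move=> n2 nm Hq g.
case: n n2 nm Hq g => [//|n'] n2 nm Hq g /=.
case: (unext Hq) => q' [a' [Hq' an eq]]; subst q.
have sz' := ispw_size Hq'.
rewrite (nth_ext2' _ sz') => ea; subst a'.
rewrite (G_ext _ Hq' an) in g; case/andP: g => g' _.
have ge' : goodend q' by apply: (GE Hq' g'); lia.
move/goodendP: ge'; rewrite sz' => ge'.
have E : forall i, i < n' -> nth 0 (ext q' n') i = nth 0 q' i.
  by move=> i lt; rewrite nth_ext1 ?sz' //; have := ispw_lt Hq' lt; lia.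
move=> i l1 l2.
rewrite E ?E; try lia.
rewrite E in l1; last lia.
by rewrite ge'; lia.
Qed.

Lemma map_map_eq (A B C : Type) (f : B -> C) (g : A -> B) s :
  [seq f x | x <- [seq g y | y <- s]] = [seq f (g y) | y <- s].
Proof. by rewrite -map_comp. Qed.

Lemma count_M1 m : 3 <= m -> count (G m) (En m.+1) = 2 ^ (m - 2).
Proof.
move=> m3.
case: m m3 => [//|m'] m3.
rewrite count_En_succ En_succ sumn_flat map_map_eq.
rewrite (@sumn_scale _ _ _ (G m'.+1) 1); last first.
  move=> q; rewrite mem_En => Hq; rewrite mul1n map_map_eq.
  have sz := ispw_size Hq.
  case g : (G m'.+1 q); last first.
    rewrite (@sumn_scale _ _ _ pred0 1); first by rewrite count_pred0.
    move=> a; rewrite mem_iota => ain.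
    transitivity 0; last by [].
    apply/eqP; rewrite -leqn0 leqNgt -has_count; apply/negP.
    case/hasP => b bin; rewrite mem_iota in bin.
    have Hqa : ispw m'.+1 (ext q a) by apply: (ext_ispw Hq); lia.
    rewrite (G_ext _ Hqa) ?(G_ext _ Hq) ?g //; lia.
  have iq : invw q by apply: (G_inv Hq g); lia.
  have gq : goodend q by apply: (GE Hq g); lia.
  have m2 : 2 <= m' by lia.
  have pb := prefix_block m2 (ltnSn m') Hq g.
  set astar := if nth 0 q m'.-1 == m'.-1 then nth 0 q m'.-2 else m'.-1.
  rewrite (@sumn_scale _ _ _ (pred1 astar) 1); last first.
    move=> a; rewrite mem_iota => ain.
    have am : a <= m' by lia.
    have Hqa := ext_ispw Hq am.
    rewrite (@eq_in_count _ _ (fun b => (a == astar) && (b == nth 0 q m'.-1))).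
      rewrite count_and_iota ?mul1n //.
      have : m'.-1 < m' by lia.
      move/(ispw_lt Hq); lia.
    move=> b; rewrite mem_iota => bin.
    rewrite (G_ext _ Hqa) ?(G_ext _ Hq) ?g //=.
    rewrite -(L9 m2 Hq iq gq pb am); last lia.
    rewrite eqxx (_ : (m'.+2 != m'.+1) = true); last lia.
    by case: (invw (ext q a)); case: (invw (ext (ext q a) b)).
  rewrite mul1n count_pred1_iota //.
  rewrite /astar; case: ifP => _; last lia.
  have : m'.-2 < m' by lia.
  move/(ispw_lt Hq); lia.
rewrite mul1n count_lay //; last lia.
by have -> : m'.-1 = m'.+1 - 2 by lia.
Qed.

Lemma count_step m n : 3 <= m -> m.+1 <= n ->
  count (G m) (En n.+1) = (if n == m.+1 then 1 else 2) * count (G m) (En n).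
Proof.
move=> m3 mn.
rewrite count_En_succ (@sumn_scale _ _ _ (G m) (if n == m.+1 then 1 else 2)) //.
move=> p; rewrite mem_En => H.
case g : (G m p); last first.
  rewrite muln0; apply/eqP; rewrite -leqn0 leqNgt -has_count; apply/negP.
  case/hasP => a ain; rewrite mem_iota in ain.
  rewrite (G_ext _ H) ?g //; lia.
rewrite muln1.
rewrite (@eq_in_count _ _ (fun a => invw (ext p a))); last first.
  move=> a; rewrite mem_iota => ain.
  rewrite (G_ext _ H) ?g /=; last lia.
  by rewrite (_ : (n.+1 != m) = true) ?eqb_id //; lia.
have ip : invw p by apply: (G_inv H g); lia.
rewrite (L6 H ip); last lia.
case: (eqVneq n m.+1) => [e|ne].
  subst n.
  case: (unext H) => r [b [Hr bn ep]].
  have gr := g; rewrite ep (G_ext _ Hr bn) in gr; case/andP: gr => gr /eqP iw.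
  have iw' : invw (ext r b) by rewrite iw; lia.
  have nr := G_ninv Hr gr (_ : 1 <= m) (erefl m).
  case ge : (goodend p) => //.
  rewrite ep in ge.
  have := L7 Hr bn iw' ge; rewrite (negbTE (nr _)) //; lia.
by rewrite (GE H g) //; lia.
Qed.

Lemma count_big m n : 3 <= m -> m.+2 <= n -> count (G m) (En n) = 2 ^ (n - 4).
Proof.
move=> m3; elim: n => [|n IH] mn; first lia.
rewrite count_step //.
case: (eqVneq n m.+1) => [e|ne].
  subst n; rewrite mul1n count_M1 //.
rewrite IH; last lia.
have -> : n.+1 - 4 = (n - 4).+1 by lia.
by rewrite expnS.
Qed.

Theorem mainTheorem13 (k : nat) (E : {set 'I_k.+1}) :
  5 <= k ->
  (inord 0 : 'I_k.+1) \in E -> (inord 1 : 'I_k.+1) \in E ->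
  (inord 2 : 'I_k.+1) \in E -> (inord k : 'I_k.+1) \in E ->
  #|E| = k ->
  #|[set tau : 'S_k | jset tau == E]| =
    (if (inord k.-1 : 'I_k.+1) \in E then 2 ^ (k - 4) else 2 ^ (k - 3)).
Proof.
move=> k5 i0 i1 i2 ik cE.
have c1 : #|~: E| = 1 by have := cardsC E; rewrite card_ord cE; lia.
have [x ex] : exists x, ~: E = [set x] by apply/cards1P; apply/eqP.
have memE : forall j, (j \in E) = (j != x).
  by move=> j; rewrite -[j \in E]negbK -in_setC ex in_set1.
set m := val x.
have hm : forall j : nat, j <= k -> ((inord j : 'I_k.+1) \in E) = (j != m).
  by move=> j jk; rewrite memE -(inj_eq val_inj) /= inordK.
have xk : m <= k by rewrite -ltnS; exact: ltn_ord.
have m0 := i0; rewrite hm in m0; last lia.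
have m1 := i1; rewrite hm in m1; last lia.
have m2 := i2; rewrite hm in m2; last lia.
have mk := ik; rewrite hm in mk; last lia.
have m3 : 3 <= m by lia.
have mk1 : m < k by lia.
have -> : [set tau : 'S_k | jset tau == E] = [set tau : 'S_k | G m (perm_word tau)].
  apply/setP => t; rewrite !inE; apply/eqP/idP.
    move=> eJ; apply/allP => j; rewrite mem_iota size_pw add0n => /andP[_ jk].
    have e := memE (Ordinal jk); rewrite -eJ inE -(inj_eq val_inj) /= in e.
    by apply/eqP; exact: e.
  move/allP => h; apply/setP => J; rewrite inE memE -(inj_eq val_inj) /=.
  have := h (val J); rewrite mem_iota size_pw ltn_ord => /(_ isT) /eqP e.
  exact: e.
rewrite card_count.
case: (eqVneq m k.-1) => em.
  rewrite hm ?em ?eqxx /=; last lia.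
  have ek : k = m.+1 by lia.
  rewrite ek count_M1 //; congr (2 ^ _); lia.
rewrite hm; last lia.
rewrite (_ : (k.-1 != m) = true); last lia.
by rewrite count_big //; lia.
Qed.
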